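(* Let $N\ge1$, $0<\lambda\le\Lambda$, assume $\beta=\frac{\Lambda}{\lambda}(N-1)+1>2$, and let $q>1$. Let $u:\mathbb{R}^N\to[0,\infty)$ be a nonnegative viscosity solution of $\mathcal{M}^+_{\lambda,\Lambda}(D^2u)\ge u^q$ in $\mathbb{R}^N$, and set $m(R)=\min_{|x|\le R}u(x)$. Then there exists a constant $C>0$ such that $$m(R)\le C R^{-\frac{2}{q-1}}\quad\text{for all }R>0.$$
   Context: For $M\in\mathrm{Sym}_N$ with eigenvalues $e_1,\dots,e_N$, $\mathcal{M}^+_{\lambda,\Lambda}(M)=\sup_{\lambda I_N\le A\le\Lambda I_N}(-\mathrm{Tr}(AM))=-\lambda\sum_{e_k>0}e_k-\Lambda\sum_{e_k<0}e_k$. A viscosity solution of an inequality $G(x,u,Du,D^2u)\ge 0$ in an open set $\Omega$ is a lower semicontinuous $u$ such that for every $x_0\in\Omega$ and every $\varphi\in C^2$ for which $u-\varphi$ has a local minimum at $x_0$, $G(x_0,u(x_0),D\varphi(x_0),D^2\varphi(x_0))\ge0$. *)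

(* Defs.v *)
From HB Require Import structures.
From mathcomp Require Import all_boot all_order all_algebra.
From mathcomp Require Import all_classical all_reals all_analysis.
Set Implicit Arguments. Unset Strict Implicit. Unset Printing Implicit Defensive.
Import Order.TTheory GRing.Theory Num.Theory.
Import numFieldNormedType.Exports.
Local Open Scope classical_set_scope.
Local Open Scope ring_scope.

Section Defs.
Variables (R : realType) (N : nat).

Definition enorm (x : 'rV[R]_N) : R := Num.sqrt (\sum_(i < N) x 0 i ^+ 2).

Definition qform (A : 'M[R]_N) (v : 'rV[R]_N) : R := (v *m A *m v^T) 0 0.

Definition symmetric (M : 'M[R]_N) : Prop := M^T = M.

Definition pucci_admissible (lam Lam : R) (A : 'M[R]_N) : Prop :=
  symmetric A /\ forall v : 'rV[R]_N,
    lam * qform 1%:M v <= qform A v /\ qform A v <= Lam * qform 1%:M v.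

Definition pucci_max (lam Lam : R) (M : 'M[R]_N) : R :=
  sup [set - \tr (A *m M) | A in pucci_admissible lam Lam].

Definition ebasis (i : 'I_N) : 'rV[R]_N := delta_mx 0 i.
Definition partial (i : 'I_N) (f : 'rV[R]_N -> R) (x : 'rV[R]_N) : R :=
  'D_(ebasis i) f x.

Definition C2 (phi : 'rV[R]_N -> R) : Prop :=
  continuous phi /\
  (forall i, (forall x, derivable phi x (ebasis i)) /\ continuous (partial i phi)) /\
  (forall i j, (forall x, derivable (partial i phi) x (ebasis j)) /\
               continuous (partial j (partial i phi))).

Definition hessian (phi : 'rV[R]_N -> R) (x : 'rV[R]_N) : 'M[R]_N :=
  \matrix_(i, j) partial j (partial i phi) x.

Definition lsc (u : 'rV[R]_N -> R) : Prop :=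
  forall x0 (e : R), 0 < e -> \forall x \near x0, u x0 - e < u x.

Definition visc_supersol_pucci (lam Lam q : R) (u : 'rV[R]_N -> R) : Prop :=
  lsc u /\
  forall (x0 : 'rV[R]_N) (phi : 'rV[R]_N -> R), C2 phi ->
    (\forall x \near x0, u x0 - phi x0 <= u x - phi x) ->
    pucci_max lam Lam (hessian phi x0) - (u x0) `^ q >= 0.

(* m(R) = min_{|x| <= R} u(x) (as an infimum; attained for lsc u) *)
Definition minball (u : 'rV[R]_N -> R) (r : R) : R :=
  inf [set u x | x in [set x | enorm x <= r]].

End Defs.

(* Main.v *)
Require Import Defs.
From HB Require Import structures.
From mathcomp Require Import all_boot all_order all_algebra.
From mathcomp Require Import all_classical all_reals all_analysis.
From mathcomp Require Import ring lra.
Set Implicit Arguments. Unset Strict Implicit. Unset Printing Implicit Defensive.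
Import Order.TTheory GRing.Theory Num.Theory.
Import numFieldNormedType.Exports.
Local Open Scope classical_set_scope.
Local Open Scope ring_scope.
Section S1.
Variables (R : realType) (N : nat).

Lemma qform1E (v : 'rV[R]_N) : qform 1%:M v = \sum_i v 0 i ^+ 2.
Proof.
rewrite /qform mulmx1 !mxE; apply: eq_bigr => i _; by rewrite !mxE expr2.
Qed.

Lemma qform1_ge0 (v : 'rV[R]_N) : 0 <= qform 1%:M v.
Proof. by rewrite qform1E sumr_ge0 // => i _; rewrite sqr_ge0. Qed.

Lemma qform_delta (A : 'M[R]_N) i : qform A (delta_mx 0 i) = A i i.
Proof.
by rewrite /qform -rowE trmx_delta -colE !mxE.
Qed.

Lemma qform_scalar (a : R) (v : 'rV[R]_N) : qform a%:M v = a * qform 1%:M v.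
Proof. by rewrite /qform mul_mx_scalar -scalemxAl mxE mulmx1. Qed.

Lemma pucci_bound (lam Lam k : R) :
  0 < lam -> lam <= Lam -> 0 <= k ->
  @pucci_max R N lam Lam ((- k)%:M) <= k * (Lam * N%:R).
Proof.
move=> l0 lL k0; apply: ge_sup.
  exists (- \tr ((lam%:M : 'M[R]_N) *m (- k)%:M)), (lam%:M : 'M[R]_N) => //; split.
    by rewrite /symmetric; apply/matrixP => i j; rewrite !mxE eq_sym.
  move=> v; rewrite qform_scalar.
  by split; [rewrite lexx | apply: ler_wpM2r => //; apply: qform1_ge0].
move=> _ [A [_ hA] <-].
rewrite mul_mx_scalar mxtraceZ mulNr opprK ler_wpM2l //.
have -> : Lam * N%:R = \sum_(i < N) Lam by rewrite sumr_const card_ord mulr_natr.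
apply: ler_sum => i _; have [_ h2] := hA (delta_mx 0 i).
by move: h2; rewrite !qform_delta mxE eqxx mulr1n mulr1.
Qed.
End S1.
Section S.
Variables (R : realType) (N : nat).
Lemma is_derive_coord (x v : 'rV[R]_N) i :
  is_derive x v (fun y : 'rV[R]_N => y 0 i) (v 0 i).
Proof.
have E : \forall h \near (0 : R)^',
   h^-1 *: (((fun y : 'rV[R]_N => y 0 i) \o shift x) (h *: v) - x 0 i) = v 0 i.
  rewrite near_withinE; near=> h => hN0.
  by rewrite /= !mxE addrK [_ *: _]mulrA mulVf ?mul1r.
split; first exact: (is_cvg_near_cst (v 0 i) E).
rewrite /derive; exact: (lim_near_cst _ E).
Unshelve. all: by end_near. Qed.
Definition crd (i : 'I_N) := fun y : 'rV[R]_N => y 0 i.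
Definition phi (c K : R) := fun y : 'rV[R]_N => c - K * \sum_i y 0 i ^+ 2.

Lemma phiE c K : phi c K = cst c - K \*: \sum_i (crd i * crd i).
Proof.
apply/funext => y; rewrite /phi /= fct_sumE /=; congr (_ - _ * _); apply: eq_bigr => i _; rewrite expr2.
Qed.
Lemma is_derive_phi c K x v : is_derive x v (phi c K) (- (K * \sum_i (2 * x 0 i * v 0 i))).
Proof.
rewrite phiE.
have hs : is_derive x v (\sum_i (crd i * crd i))
   (\sum_i (crd i x *: v 0 i + crd i x *: v 0 i)).
  apply: is_derive_sum => i; apply: is_deriveM; exact: is_derive_coord.
have := is_deriveB (is_derive_cst c x v) (is_deriveZ K hs).
move=> h; apply: (is_derive_eq h).
rewrite sub0r /crd; congr (- _); rewrite /GRing.scale /=; congr (_ * _).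
by apply: eq_bigr => i _; rewrite -mulrA mulr2n mulrDl !mul1r.
Qed.
Lemma phi_continuous c K : continuous (phi c K).
Proof.
move=> x; apply: differentiable_continuous; rewrite phiE.
apply: differentiableB; first exact: differentiable_cst.
apply: differentiableZ; apply: differentiable_sum => i.
by apply: differentiableM; apply: differentiable_coord.
Qed.

Lemma ebasisE (i j : 'I_N) : (ebasis R i) 0 j = (j == i)%:R :> R.
Proof. by rewrite /ebasis mxE eqxx. Qed.

Lemma partial_phi c K i : partial i (phi c K) = (fun x => - (2 * K) * x 0 i).
Proof.
apply/funext => x; have h := is_derive_phi c K x (ebasis R i).
rewrite /partial derive_val (bigD1 i) //= big1 ?addr0.
  by rewrite ebasisE eqxx mulr1 mulNr mulrA [K * 2]mulrC.
by move=> j ji; rewrite ebasisE (negbTE ji) mulr0.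
Qed.

Lemma lin_crdE (a : R) i : (fun x : 'rV[R]_N => a * x 0 i) = a \*: crd i.
Proof. by []. Qed.

Lemma partial_lin (a : R) i j : partial j (fun x : 'rV[R]_N => a * x 0 i) = (fun=> a * (i == j)%:R).
Proof.
apply/funext => x; rewrite lin_crdE.
have h : is_derive x (ebasis R j) (a \*: crd i) (a *: (ebasis R j 0 i)).
  apply: is_deriveZ; exact: is_derive_coord.
by rewrite /partial derive_val ebasisE.
Qed.

Lemma phi_C2 c K : C2 (phi c K).
Proof.
split; first exact: phi_continuous.
split=> [i|i j].
  split=> [x|]; first by have h := is_derive_phi c K x (ebasis R i); exact: ex_derive.
  rewrite partial_phi lin_crdE => x; apply: differentiable_continuous.
  apply: differentiableZ; exact: differentiable_coord.
rewrite partial_phi; split=> [x|].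
  rewrite lin_crdE; have h : is_derive x (ebasis R j) ((- (2 * K)) \*: crd i) ((- (2 * K)) *: (ebasis R j 0 i)).
    apply: is_deriveZ; exact: is_derive_coord.
  exact: ex_derive.
by rewrite partial_lin; apply: cst_continuous.
Qed.

Lemma hessian_phi c K x : hessian (phi c K) x = (- (2 * K))%:M.
Proof.
apply/matrixP => i j; rewrite /hessian !mxE partial_phi partial_lin.
by rewrite eq_sym mulr_natr.
Qed.
End S.
Section C.
Variables (R : realType) (N : nat).
Lemma lsc_min (g : 'rV[R]_N -> R) (A : set 'rV[R]_N) (lb : R) :
  compact A -> A !=set0 ->
  (forall x0 (e : R), 0 < e -> \forall x \near x0, g x0 - e < g x) ->
  (forall x, A x -> lb <= g x) ->
  exists2 p, A p & forall x, A x -> g p <= g x.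
Proof.
move=> cA [a Aa] lsc glb.
set mu := inf (g @` A).
have hlb : has_lbound (g @` A) by exists lb => _ [x Ax <-]; exact: glb.
have hinf : has_inf (g @` A) by split => //; exists (g a), a.
pose B := fun e : R => A `&` [set x | g x < mu + e].
have FF : Filter (filter_from [set e : R | 0 < e] B).
  apply: filter_from_filter; first by exists 1 => /=.
  move=> i j /= i0 j0; exists (Num.min i j); first by rewrite /= lt_min i0 j0.
  move=> x [Ax gx]; split; split => //; rewrite /= (lt_le_trans gx) // lerD2l ge_min lexx ?orbT //.
have PF : ProperFilter (filter_from [set e : R | 0 < e] B).
  apply: filter_from_proper => e /= e0.
  have [_ [x Ax <-] gx] := inf_adherent e0 hinf.
  by exists x.
have FA : filter_from [set e : R | 0 < e] B A by exists 1 => //= x [].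
have [p [Ap clp]] := cA _ PF FA.
exists p => // x Ax.
suff : g p <= mu by move/le_trans; apply; apply: ge_inf => //; exists x.
rewrite leNgt; apply/negP => mup.
set e := (g p - mu) / 2.
have e0 : 0 < e by rewrite divr_gt0 // subr_gt0.
have [z [[_ gz1] gz2]] := clp (B e) _ (ex_intro2 _ _ e e0 (fun _ h => h)) (lsc p e e0).
move: gz2 gz1 => /= h1 h2.
have : g p - e < mu + e by apply: lt_trans h1 h2.
rewrite /e; lra.
Qed.
End C.
Section K.
Variables (R : realType) (N : nat).
Definition S2 (x : 'rV[R]_N) := \sum_i x 0 i ^+ 2.
Lemma S2_ge0 (x : 'rV[R]_N) : 0 <= S2 x.
Proof. by rewrite sumr_ge0 // => i _; rewrite sqr_ge0. Qed.
Lemma coord_le_S2 (x : 'rV[R]_N) i : x 0 i ^+ 2 <= S2 x.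
Proof.
rewrite /S2 (bigD1 i) //= lerDl sumr_ge0 // => j _; exact: sqr_ge0.
Qed.
Lemma enorm_le (x : 'rV[R]_N) (r : R) : 0 <= r -> (enorm x <= r) = (S2 x <= r ^+ 2).
Proof.
move=> r0; rewrite /enorm -[X in _ <= X](ger0_norm r0) -sqrtr_sqr ler_sqrt ?sqr_ge0 //.
Qed.
Lemma enorm0 : enorm (0 : 'rV[R]_N) = 0.
Proof. by rewrite /enorm big1 ?sqrtr0 // => i _; rewrite mxE expr0n. Qed.

Variable u : 'rV[R]_N -> R.
Hypothesis u0 : forall x, 0 <= u x.

Lemma mb_hasinf r : 0 <= r -> has_inf [set u x | x in [set x | enorm x <= r]].
Proof.
move=> r0; split; first by exists (u 0), 0 => //=; rewrite enorm0.
by exists 0 => _ [x _ <-].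
Qed.
Lemma mb_ge0 r : 0 <= r -> 0 <= minball u r.
Proof.
move=> r0; apply: lb_le_inf; first by exists (u 0), 0 => //=; rewrite enorm0.
by move=> _ [x _ <-].
Qed.
Lemma mb_le r x : enorm x <= r -> minball u r <= u x.
Proof.
move=> hx; apply: ge_inf; last by exists x.
by exists 0 => _ [y _ <-].
Qed.
Lemma mb_adh r e : 0 <= r -> 0 < e -> exists x, enorm x <= r /\ u x < minball u r + e.
Proof.
move=> r0 e0; have [_ [x hx <-] h] := inf_adherent e0 (mb_hasinf r0).
by exists x.
Qed.
Lemma mb_mono r : 0 <= r -> minball u (2 * r) <= minball u r.
Proof.
move=> r0; apply/ler_addgt0Pr => e e0.
have [x [hx1 hx2]] := mb_adh r0 e0.
apply: le_trans (ltW hx2); apply: mb_le; apply: le_trans hx1 _.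
by rewrite ler_peMl // ler1n.
Qed.
Lemma key (lam Lam q : R) : 0 < lam -> lam <= Lam -> 1 < q ->
  visc_supersol_pucci lam Lam q u ->
  forall r, 0 < r -> minball u (2 * r) `^ q * r `^ 2 <= (2 * (Lam * N%:R)) * minball u r.
Proof.
move=> l0 lL q1 [lscu visc] r r0.
have q0 : 0 < q by apply: lt_trans q1.
have LN0 : 0 <= Lam * N%:R by rewrite mulr_ge0 // ltW // (lt_le_trans l0 lL).
set m := minball u r.
have m0 : 0 <= m := mb_ge0 (ltW r0).
move: m0; rewrite le_eqVlt => /predU1P[mz|mpos].
  have -> : minball u (2 * r) = 0.
    apply/le_anti/andP; split; last by apply: mb_ge0; rewrite mulr_ge0 // ltW.
    by rewrite mz; apply: mb_mono; apply: ltW.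
  by rewrite powR0 ?gt_eqF // mul0r -mz mulr0.
set K := m / r ^+ 2.
have r20 : 0 < r ^+ 2 by rewrite exprn_gt0.
have K0 : 0 < K by rewrite divr_gt0.
have Kr : K * r ^+ 2 = m by rewrite /K divfK // gt_eqF.
set c := 4 * m.
pose g x := u x - phi c K x.
have phiS x : phi c K x = c - K * S2 x by [].
have [y [hy1 hy2]] := mb_adh (ltW r0) mpos.
have Sy : S2 y <= r ^+ 2 by rewrite -enorm_le // ltW.
have KSy : K * S2 y <= m by rewrite -Kr ler_wpM2l // ltW.
have gy : g y < 0 by rewrite /g phiS /c; lra.
pose Acube := [set v : 'rV[R]_N | forall i, `[- (2 * r), 2 * r]%classic (v ord0 i)].
have cA : compact Acube.
  apply: (@rV_compact _ _ (fun=> `[- (2 * r), 2 * r]%classic)) => i.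
  exact: segment_compact.
have inA v : Acube v <-> forall i, - (2 * r) <= v 0 i <= 2 * r.
  by split => h i; have := h i; rewrite /= in_itv.
have lscg : forall x0 (e : R), 0 < e -> \forall x \near x0, g x0 - e < g x.
  move=> x0 e e0.
  have e20 : 0 < e / 2 by rewrite divr_gt0.
  have h1 := lscu x0 _ e20.
  have h2 := @cvgr_dist_lt _ _ _ (nbhs x0) (nbhs_filter x0) (phi c K) (phi c K x0) (@phi_continuous R N c K x0) _ e20.
  apply: (@filterS2 _ _ (nbhs_filter x0) _ _ _ _ h1 h2) => x h5 /ltr_normlP [h3 h4].
  rewrite /g; lra.
have glb x : Acube x -> - c <= g x.
  move=> _; rewrite /g phiS; have := u0 x; have := S2_ge0 x.
  have := ltW K0; nra.
have A0 : Acube 0.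
  apply/inA => i; rewrite mxE; apply/andP; split; have := ltW r0; lra.
have [p Ap pmin] := lsc_min cA (ex_intro _ 0 A0) lscg glb.
have yA : Acube y.
  apply/inA => i; have := coord_le_S2 y i; have := ltW r0; nra.
have pglob x : g p <= g x.
  case: (pselect (Acube x)) => [Ax|nAx]; first exact: pmin.
  have [i hi] : exists i, ~ (- (2 * r) <= x 0 i <= 2 * r).
    by apply/existsNP => h; apply: nAx; apply/inA.
  have hx : (2 * r) ^+ 2 < x 0 i ^+ 2.
    move/negP: hi; rewrite negb_and -!ltNge => /orP [h|h]; have := r0; nra.
  have hS := coord_le_S2 x i.
  have KS : c <= K * S2 x.
    rewrite /c -Kr; have := K0; nra.
  have := gy; have := u0 x; have := pmin y yA; rewrite /g !phiS; lra.
have hv := visc p (phi c K) (@phi_C2 R N c K) (filterE (nbhs_filter p) (fun x => pglob x)).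
move: hv; rewrite hessian_phi subr_ge0 => hv.
have hpb := @pucci_bound R N lam Lam (2 * K) l0 lL (ltW (mulr_gt0 (ltr0Sn _ 1) K0)).
have pball : enorm p <= 2 * r.
  rewrite enorm_le ?mulr_ge0 //; last exact: ltW.
  have := pmin y yA; move: gy; rewrite /g phiS => gy' gpy.
  have := u0 p; move=> up.
  have : K * S2 p < K * (2 * r) ^+ 2.
    have -> : K * (2 * r) ^+ 2 = c by rewrite /c -Kr; ring.
    rewrite phiS in gpy; lra.
  rewrite ltr_pM2l // => h; exact: ltW.
have mp := mb_le pball.
have h1 : minball u (2 * r) `^ q <= u p `^ q.
  apply: ge0_ler_powR => //; [exact: ltW | rewrite nnegrE mb_ge0 // mulr_ge0 // ltW // | by rewrite nnegrE].
have h2 : minball u (2 * r) `^ q <= 2 * K * (Lam * N%:R) by apply: le_trans h1 (le_trans hv hpb).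
rewrite (_ : r `^ 2 = r ^+ 2); last by rewrite -powR_mulrn // ltW.
rewrite -Kr.
have := powR_ge0 (minball u (2 * r)) q; have := LN0.
nra.
Qed.
End K.
Lemma iterate_bound (R : realType) (m : R -> R) (q D u0 : R) :
  1 < q -> 0 <= D -> (forall r, 0 < r -> 0 <= m r) -> (forall r, 0 < r -> m r <= u0) ->
  (forall r, 0 < r -> m (2 * r) `^ q * r `^ 2 <= D * m r) ->
  exists C : R, 0 < C /\ forall r, 0 < r -> m r <= C * r `^ (- (2 / (q - 1))).
Proof.
move=> q1 D0 m0 mu0 key.
have q10 : q - 1 != 0 by rewrite subr_eq0 gt_eqF.
have q0 : 0 < q by apply: lt_trans q1.
set a := 2 / (q - 1).
have a0 : 0 <= a by rewrite /a divr_ge0 // subr_ge0 ltW.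
have aq : a * q = a + 2 by rewrite /a; field.
pose b r := m r * r `^ a.
pose E := D * 2 `^ (a * q).
have E0 : 0 <= E by rewrite /E mulr_ge0 // powR_ge0.
pose M := Num.max (Num.max u0 1) (E `^ (1 / (q - 1))).
have M1 : 1 <= M by rewrite /M !le_max lexx orbT.
have M0 : 0 <= M by apply: le_trans M1.
have b0 r : 0 < r -> 0 <= b r by move=> r0; rewrite mulr_ge0 ?m0 ?powR_ge0.
have claim1 r : 0 < r -> b (2 * r) `^ q <= E * b r.
  move=> r0; rewrite /b powRM ?m0 ?powR_ge0 ?mulr_gt0 //.
  rewrite -powRrM powRM ?ler0n; last by apply: ltW.
  rewrite [X in r `^ X]aq powRD; last by rewrite (gt_eqF r0) implybT.
  have -> : m (2 * r) `^ q * (2 `^ (a * q) * (r `^ a * r `^ 2)) =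
     2 `^ (a * q) * r `^ a * (m (2 * r) `^ q * r `^ 2) by ring.
  rewrite /E.
  have -> : D * 2 `^ (a * q) * (m r * r `^ a) = 2 `^ (a * q) * r `^ a * (D * m r) by ring.
  by apply: ler_wpM2l; [rewrite mulr_ge0 ?powR_ge0|exact: key].
  done.
have claim2 : E * M <= M `^ q.
  rewrite -(mulr_powRB1 M0 q0) mulrC; apply: ler_wpM2l => //.
  have -> : E = (E `^ (1 / (q - 1))) `^ (q - 1).
    by rewrite -powRrM mul1r mulVf // powRr1.
  apply: ge0_ler_powR; [by rewrite subr_ge0 ltW| by rewrite nnegrE powR_ge0 | by rewrite nnegrE | by rewrite /M le_max lexx orbT].
have claim3 n : forall x, 0 < x -> x <= 2 ^+ n -> b x <= M.
  elim: n => [|n IH] x x0 xn.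
    rewrite /b -[M]mulr1; apply: ler_pM; rewrite ?m0 ?powR_ge0 //.
      by apply: le_trans (mu0 _ x0) _; rewrite /M !le_max lexx.
    have -> : 1 = 1 `^ a :> R by rewrite powR1.
    by apply: ge0_ler_powR => //; rewrite nnegrE ltW.
  have [x1|x1] := leP x 1.
    by apply: IH => //; apply: (le_trans x1); apply: exprn_ege1; rewrite ler1n.
  have x2 : 0 < x / 2 by rewrite divr_gt0.
  have hb := claim1 _ x2; rewrite mulrC divfK ?pnatr_eq0 // in hb.
  have hb2 : b (x / 2) <= M by apply: IH => //; rewrite ler_pdivrMr // mulrC -exprS.
  have : b x `^ q <= M `^ q.
    apply: le_trans hb _; apply: le_trans claim2; exact: ler_wpM2l.
  apply: contraTT; rewrite -!ltNge => Mb.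
  by apply: gt0_ltr_powR => //; rewrite nnegrE ?b0.
exists M; split; first by apply: lt_le_trans M1.
move=> r r0.
have [n rn] : exists n, r <= 2 ^+ n.
  exists (Num.trunc r).+1; apply: le_trans (ltW (truncnS_gt r)) _.
  by rewrite -natrX ler_nat ltnW // ltn_expl.
have := claim3 n r r0 rn; rewrite /b => h.
have ra : 0 < r `^ a by rewrite powR_gt0.
rewrite powRN ler_pdivlMr //.
Qed.

Unset Implicit Arguments.
Theorem lemma2p4 (R : realType) (N : nat) (lam Lam q : R) (u : 'rV[R]_N -> R) :
  (1 <= N)%N -> 0 < lam -> lam <= Lam ->
  Lam / lam * (N%:R - 1) + 1 > 2 ->
  1 < q ->
  (forall x, 0 <= u x) ->
  visc_supersol_pucci lam Lam q u ->
  exists C : R, 0 < C /\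
    forall r : R, 0 < r -> minball u r <= C * r `^ (- (2 / (q - 1))).
Proof.
move=> _ l0 lL _ q1 u0 hv.
apply: (@iterate_bound R (minball u) q (2 * (Lam * N%:R)) (u 0)) => //.
- by rewrite mulr_ge0 // mulr_ge0 // ltW // (lt_le_trans l0 lL).
- by move=> r r0; apply: mb_ge0 => //; apply: ltW.
- by move=> r r0; apply: (mb_le u0); rewrite enorm0; apply: ltW.
- by move=> r r0; apply: (key u0 l0 lL q1 hv).
Qed.
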